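(* Let $p\in[1,\infty)$. Then for every $f\in\bigcup_{s\in(0,\infty)}{\rm B}^\kappa_{s,p}(\mathbb{R}^n)$, $$\lim_{s\to0^+}s\int_0^1t^{-(1+\frac{ps}{2})}\int_{\mathbb{R}^n}P_t^\kappa(|f-f(x)|^p)(x)\,\mu_\kappa(dx)\,dt=0.$$
   Context: Dunkl setting on $\mathbb{R}^n$: root system $\mathcal{R}$ with reflections $r_\alpha$, positive subsystem $\mathcal{R}_+$, multiplicity $\kappa:\mathcal{R}\to[0,\infty)$ invariant under the reflection group. $\mu_\kappa=w_\kappa dx$ with $w_\kappa(x)=\prod_{\alpha\in\mathcal{R}_+}|\langle\alpha,x\rangle|^{2\kappa(\alpha)}$; $(P_t^\kappa)$ is the Dunkl heat semigroup generated by the Dunkl Laplacian $\Delta_\kappa f=\Delta f+2\sum_{\alpha\in\mathcal{R}_+}\kappa(\alpha)\big(\frac{\langle\alpha,\nabla f(x)\rangle}{\langle\alpha,x\rangle}-\frac{f(x)-f(r_\alpha x)}{\langle\alpha,x\rangle^2}\big)$, with heat kernel $p_t^\kappa$; $P_t^\kappa(|f-f(x)|^p)(x)=\int|f(y)-f(x)|^pp_t^\kappa(x,y)\mu_\kappa(dy)$. For $p\in[1,\infty)$, $s>0$: ${\rm N}^\kappa_{s,p}(f)=\big(\int_0^\infty t^{-(1+\frac{sp}{2})}\int P_t^\kappa(|f-f(x)|^p)(x)\mu_\kappa(dx)dt\big)^{1/p}$ and ${\rm B}^\kappa_{s,p}(\mathbb{R}^n)=\{f\in{\rm L}^p(\mu_\kappa):{\rm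 N}^\kappa_{s,p}(f)<\infty\}$. *)

(* Defs.v *)
(* Dunkl setting on R^n, with R^n = n.-tuple R
   (equipped with mathcomp-analysis' product (= Borel) sigma-algebra).    *)
From HB Require Import structures.
From mathcomp Require Import all_boot all_order all_algebra.
From mathcomp Require Import all_classical all_reals all_analysis.
Set Implicit Arguments. Unset Strict Implicit. Unset Printing Implicit Defensive.
Import Order.TTheory GRing.Theory Num.Theory.
Import numFieldNormedType.Exports.
Local Open Scope ring_scope.
Local Open Scope classical_set_scope.

Section Dunkl.
Variable R : realType.

Definition vadd n (x y : n.-tuple R) : n.-tuple R := [tuple tnth x i + tnth y i | i < n].
Definition vsub n (x y : n.-tuple R) : n.-tuple R := [tuple tnth x i - tnth y i | i < n].
Definition vscale n (c : R) (x : n.-tuple R) : n.-tuple R := [tuple c * tnth x i | i < n].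
Definition vzero n : n.-tuple R := [tuple (0 : R) | i < n].
Definition dot n (x y : n.-tuple R) : R := \sum_(i < n) tnth x i * tnth y i.
Definition sqnorm n (x : n.-tuple R) : R := dot x x.

Definition refl n (a x : n.-tuple R) : n.-tuple R :=
  vsub x (vscale (2 * dot a x / dot a a) a).

(* ---------- Lebesgue integral on R^n ----------
   Defined as the iterated one-dimensional Lebesgue integral; for the
   nonnegative measurable integrands used below this is the Lebesgue
   integral on R^n (Tonelli). *)
Fixpoint intRn (n : nat) : (n.-tuple R -> \bar R) -> \bar R :=
  match n return (n.-tuple R -> \bar R) -> \bar R with
  | 0 => fun g => g [tuple]
  | m.+1 => fun g =>
      (\int[@lebesgue_measure R]_(x0 in [set: R]) intRn (fun v => g (cons_tuple x0 v)))%E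
  end.

(* ---------- root system data ----------
   Rs : the (finite, duplicate-free) root system R, listed as a sequence;
   beta : a vector with <a,beta> <> 0 for every root; the positive
   subsystem is R_+ = {a in R | <a,beta> > 0};  kappa : multiplicity. *)
Definition is_root_system n (Rs : seq (n.-tuple R)) : Prop :=
  [/\ uniq Rs,
      (forall a, a \in Rs -> dot a a = 2),
      (forall a b, a \in Rs -> b \in Rs -> refl a b \in Rs) &
      (forall a (c : R), a \in Rs -> vscale c a \in Rs -> c = 1 \/ c = -1)].

Definition is_positive_direction n (Rs : seq (n.-tuple R)) (beta : n.-tuple R) : Prop :=
  forall a, a \in Rs -> dot a beta != 0.

(* kappa : R -> [0,oo), invariant under the reflection group (generated by
   the r_b, b in R). *)
Definition is_multiplicity n (Rs : seq (n.-tuple R)) (kappa : n.-tuple R -> R) : Prop :=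
  (forall a, a \in Rs -> 0 <= kappa a) /\
  (forall a b, a \in Rs -> b \in Rs -> kappa (refl b a) = kappa a).

Definition wk n (Rs : seq (n.-tuple R)) beta kappa (x : n.-tuple R) : R :=
  \prod_(a <- Rs | 0 < dot a beta) (`|dot a x| `^ (2 * kappa a)).

Definition gammak n (Rs : seq (n.-tuple R)) beta kappa : R :=
  \sum_(a <- Rs | 0 < dot a beta) kappa a.

Definition has_dirderiv n (g : n.-tuple R -> R) (x xi : n.-tuple R) (d : R) : Prop :=
  (fun h : R => h^-1 * (g (vadd x (vscale h xi)) - g x)) @ (0:R)^' --> (d : R).

Definition continuous_on_Rn n (g : n.-tuple R -> R) : Prop :=
  forall x (e : R), 0 < e -> exists2 del : R, 0 < del &
    forall z, sqnorm (vsub z x) < del -> `|g z - g x| < e.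

(* E is the (real) Dunkl kernel: for every y, x |-> E x y is continuous,
   E(0,y) = 1, and T_xi E(.,y) = <xi,y> E(.,y) (Dunkl operators
   T_xi g(x) = d_xi g(x) + sum_{a in R_+} kappa(a) <a,xi> (g(x)-g(r_a x))/<a,x>)
   off the reflecting hyperplanes.  E > 0 is a known property (Roesler). *)
Definition is_dunkl_kernel n (Rs : seq (n.-tuple R)) beta kappa
    (E : n.-tuple R -> n.-tuple R -> R) : Prop :=
  [/\ forall x y, 0 < E x y,
      forall y, continuous_on_Rn (fun x => E x y),
      forall y, E (vzero n) y = 1 &
      forall y x xi, (forall a, a \in Rs -> dot a x != 0) ->
        has_dirderiv (fun z => E z y) x xi
          (dot xi y * E x y
           - \sum_(a <- Rs | 0 < dot a beta)
               kappa a * dot a xi * (E x y - E (refl a x) y) / dot a x)].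

Definition dunkl_kernel n (Rs : seq (n.-tuple R)) beta kappa : n.-tuple R -> n.-tuple R -> R :=
  match pselect (exists E, is_dunkl_kernel Rs beta kappa E) with
  | left h => proj1_sig (cid h)
  | right _ => fun _ _ => 1
  end.

Definition ck n (Rs : seq (n.-tuple R)) beta kappa : R :=
  fine (intRn (fun x : n.-tuple R => (expR (- sqnorm x / 2) * wk Rs beta kappa x)%:E)).

Definition heat_kernel n (Rs : seq (n.-tuple R)) beta kappa (t : R) (x y : n.-tuple R) : R :=
  let g := gammak Rs beta kappa + n%:R / 2 in
  (2 `^ g * ck Rs beta kappa)^-1 * t `^ (- g)
  * expR (- (sqnorm x + sqnorm y) / (4 * t))
  * dunkl_kernel Rs beta kappa (vscale (Num.sqrt (2 * t))^-1 x)
                               (vscale (Num.sqrt (2 * t))^-1 y).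

(* P_t^kappa(|f - f(x)|^p)(x) = int |f(y)-f(x)|^p p_t(x,y) mu_kappa(dy) *)
Definition Pt_diff n Rs beta kappa (p t : R) (f : n.-tuple R -> R) (x : n.-tuple R) : \bar R :=
  intRn (fun y => (`|f y - f x| `^ p * heat_kernel Rs beta kappa t x y
                   * wk Rs beta kappa y)%:E).

Definition Pt_energy n Rs beta kappa (p t : R) (f : n.-tuple R -> R) : \bar R :=
  intRn (fun x => (Pt_diff Rs beta kappa p t f x * (wk Rs beta kappa x)%:E)%E).

Definition Nk_pow n Rs beta kappa (s p : R) (f : n.-tuple R -> R) : \bar R :=
  (\int[@lebesgue_measure R]_(t in `]0%R, +oo[)
     ((t `^ (- (1 + s * p / 2)))%:E * Pt_energy Rs beta kappa p t f))%E.

Definition in_Besov n Rs beta kappa (s p : R) (f : n.-tuple R -> R) : Prop :=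
  [/\ measurable_fun [set: n.-tuple R] f,
      (intRn (fun x => (`|f x| `^ p * wk Rs beta kappa x)%:E) < +oo)%E &
      (Nk_pow Rs beta kappa s p f < +oo)%E].

End Dunkl.

(* Main.v *)
Require Import Defs.
From HB Require Import structures.
From mathcomp Require Import all_boot all_order all_algebra.
From mathcomp Require Import all_classical all_reals all_analysis.
Import Order.TTheory GRing.Theory Num.Theory.
Import numFieldNormedType.Exports.
Local Open Scope ring_scope.
Local Open Scope classical_set_scope.

Lemma intRn_ge0 (R : realType) n (g : n.-tuple R -> \bar R) :
  (forall x, (0 <= g x)%E) -> (0 <= intRn g)%E.
Proof.
elim: n g => [|n IH] g g0 /=; first exact: g0.
apply: integral_ge0 => x _; apply: IH => v; exact: g0.
Qed.

Lemma dunkl_ge0 (R : realType) n (Rs : seq (n.-tuple R)) beta kappa x y :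
  0 <= dunkl_kernel Rs beta kappa x y.
Proof.
rewrite /dunkl_kernel; case: pselect => [h|_] //.
case: (cid h) => E [+ _ _ _] /=.
by move=> /(_ x y) /ltW.
Qed.

Lemma heat_ge0 (R : realType) n (Rs : seq (n.-tuple R)) beta kappa t x y :
  0 <= heat_kernel Rs beta kappa t x y.
Proof.
rewrite /heat_kernel; apply: mulr_ge0; last exact: dunkl_ge0.
apply: mulr_ge0; last exact: expR_ge0.
apply: mulr_ge0; last exact: powR_ge0.
rewrite invr_ge0; apply: mulr_ge0; first exact: powR_ge0.
rewrite /ck; apply: fine_ge0; apply: intRn_ge0 => v.
rewrite lee_fin; apply: mulr_ge0; first exact: expR_ge0.
rewrite /wk; apply: prodr_ge0 => *; exact: powR_ge0.
Qed.

Lemma wk_ge0 (R : realType) n (Rs : seq (n.-tuple R)) beta kappa x :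
  0 <= wk Rs beta kappa x.
Proof. rewrite /wk; apply: prodr_ge0 => *; exact: powR_ge0. Qed.

Lemma energy_ge0 (R : realType) n (Rs : seq (n.-tuple R)) beta kappa p t f :
  (0 <= @Pt_energy R n Rs beta kappa p t f)%E.
Proof.
apply: intRn_ge0 => x; apply: mule_ge0; last by rewrite lee_fin wk_ge0.
apply: intRn_ge0 => y; rewrite lee_fin; apply: mulr_ge0; last exact: wk_ge0.
apply: mulr_ge0; [exact: powR_ge0|exact: heat_ge0].
Qed.

Lemma int_le (R : realType) (D1 D2 : set R) (g1 g2 : R -> \bar R) :
  (forall x, D1 x -> 0 <= g1 x)%E -> (forall x, D2 x -> 0 <= g2 x)%E ->
  (forall x, D1 x -> D2 x /\ (g1 x <= g2 x)%E) ->
  (\int[@lebesgue_measure R]_(x in D1) g1 x <= \int[@lebesgue_measure R]_(x in D2) g2 x)%E.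
Proof.
move=> g10 g20 g12.
rewrite [X in (X <= _)%E]integral_mkcond [X in (_ <= X)%E]integral_mkcond.
have h10 : forall x, (0 <= (g1 \_ D1) x)%E.
  by move=> x; rewrite /patch; case: ifPn => // /[!inE] /g10.
have h20 : forall x, (0 <= (g2 \_ D2) x)%E.
  by move=> x; rewrite /patch; case: ifPn => // /[!inE] /g20.
rewrite !ge0_integralTE //.
apply: ereal_sup_le => _ [h /= hle <-]; exists h => //= x.
apply: le_trans (hle x) _.
rewrite /patch; case: ifPn => [/[!inE] /g12 [D2x le12]|_].
  by rewrite ifT ?inE.
exact: h20.
Qed.

Theorem proposition3p1 (R : realType) (n : nat) (Rs : seq (n.-tuple R))
  (beta : n.-tuple R) (kappa : n.-tuple R -> R) (p : R)
  (f : n.-tuple R -> R) :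
  is_root_system Rs ->
  is_positive_direction Rs beta ->
  is_multiplicity Rs kappa ->
  1 <= p ->
  (exists2 s0 : R, 0 < s0 & in_Besov Rs beta kappa s0 p f) ->
  (fun s : R =>
     (s%:E * \int[@lebesgue_measure R]_(t in `]0%R, 1%R])
        ((t `^ (- (1 + p * s / 2)))%:E * Pt_energy Rs beta kappa p t f))%E)
    @ 0^'+ --> 0%E.
Proof.
move=> _ _ _ p1 [s0 s0pos [_ _ Nfin]].
set C := Nk_pow Rs beta kappa s0 p f in Nfin.
have C0 : (0 <= C)%E.
  apply: integral_ge0 => t _; apply: mule_ge0; last exact: energy_ge0.
  by rewrite lee_fin powR_ge0.
have Cfin : C \is a fin_num by rewrite ge0_fin_numE.
have bound : forall s, 0 < s <= s0 ->
  (\int[@lebesgue_measure R]_(t in `]0%R, 1%R])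
        ((t `^ (- (1 + p * s / 2)))%:E * Pt_energy Rs beta kappa p t f) <= C)%E.
  move=> s /andP[s0' ss0]; apply: int_le.
  - by move=> t _; apply: mule_ge0; [rewrite lee_fin powR_ge0|exact: energy_ge0].
  - by move=> t _; apply: mule_ge0; [rewrite lee_fin powR_ge0|exact: energy_ge0].
  move=> t /=; rewrite in_itv /= => /andP[t0 t1]; split.
    by rewrite in_itv /= t0.
  apply: lee_wpmul2r; first exact: energy_ge0.
  rewrite lee_fin; apply: ger_powR; first by rewrite t0 t1.
  rewrite lerN2 lerD2l ler_pM2r ?invr_gt0 ?ltr0n // mulrC.
  by rewrite ler_pM2r // (lt_le_trans _ p1).
apply: (@squeeze_cvge _ _ _ _ (cst 0%E) _ (fun s : R => (s%:E * C)%E)).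
- near=> s; have hs : 0 < s <= s0.
    by rewrite (ltW _ : s <= s0) ?andbT; near: s; [exact: nbhs_right_gt|exact: nbhs_right_lt].
  move: hs => /andP[hs0 hss0]; apply/andP; split.
    apply: mule_ge0; first by rewrite lee_fin ltW.
    by apply: integral_ge0 => t _; apply: mule_ge0; [rewrite lee_fin powR_ge0|exact: energy_ge0].
  apply: lee_wpmul2l; first by rewrite lee_fin ltW.
  by apply: bound; rewrite hs0.
- exact: cvg_cst.
- rewrite -(mul0e C); apply: cvgeZr => //.
  apply: cvg_EFin; first exact: nearW.
  apply: cvg_at_right_filter; exact: cvg_id.
Unshelve. all: end_near. Qed.
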